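(* For a $T_0$ space $X$, $X$ is second-countable if and only if its Smyth power space $P_S(X)$ is second-countable.
   Context: The specialization order of $X$ is $x\le y$ iff $x\in\overline{\{y\}}$; saturated sets are upper sets in this order. $\mathsf{K}(X)$ is the set of nonempty compact saturated subsets of $X$. For open $U\subseteq X$, $\Box U=\{K\in\mathsf{K}(X):K\subseteq U\}$; the Smyth power space $P_S(X)$ is $\mathsf{K}(X)$ with the topology having base $\{\Box U: U\text{ open}\}$. *)

(* Defs.v *)
From Stdlib Require Import List.


Record topology (X : Type) := Topology {
  open : (X -> Prop) -> Prop;
  open_full : open (fun _ => True);
  open_inter : forall U V, open U -> open V -> open (fun x => U x /\ V x);
  open_union : forall F : (X -> Prop) -> Prop,
      (forall U, F U -> open U) -> open (fun x => exists U, F U /\ U x)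
}.

Arguments open {X} t _.
Arguments Topology {X}.

Section Defs.
Context {X : Type} (T : topology X).

Definition T0 : Prop :=
  forall x y, (forall U, open T U -> (U x <-> U y)) -> x = y.

Definition spec_le (x y : X) : Prop :=
  forall U, open T U -> U x -> U y.

Definition saturated (A : X -> Prop) : Prop :=
  forall x y, A x -> spec_le x y -> A y.

Definition compact (A : X -> Prop) : Prop :=
  forall F : (X -> Prop) -> Prop,
    (forall U, F U -> open T U) ->
    (forall x, A x -> exists U, F U /\ U x) ->
    exists l : list (X -> Prop),
      (forall U, In U l -> F U) /\ (forall x, A x -> exists U, In U l /\ U x).

Definition nonempty (A : X -> Prop) : Prop := exists x, A x.

Definition KX : Type :=
  { A : X -> Prop | nonempty A /\ compact A /\ saturated A }.

Definition box (U : X -> Prop) : KX -> Prop :=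
  fun K => forall x, proj1_sig K x -> U x.

(* open sets of the topology on K(X) with base { box U : U open } *)
Definition smyth_open (W : KX -> Prop) : Prop :=
  forall K, W K -> exists U, open T U /\ box U K /\ (forall K', box U K' -> W K').


End Defs.

Lemma smyth_open_full {X} (T : topology X) : smyth_open T (fun _ : KX T => True).
Proof. intros K _. exists (fun _ => True). repeat split; auto using open_full. Qed.

Lemma smyth_open_inter {X} (T : topology X) (U V : KX T -> Prop) :
  smyth_open T U -> smyth_open T V -> smyth_open T (fun K => U K /\ V K).
Proof.
  intros HU HV K [UK VK].
  destruct (HU K UK) as [A [oA [bA sA]]].
  destruct (HV K VK) as [B [oB [bB sB]]].
  exists (fun x => A x /\ B x). split; [apply open_inter; auto|split].
  - intros x Kx; split; auto.
  - intros K' bK'; split; [apply sA|apply sB]; intros x Kx; apply bK'; auto.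
Qed.

Lemma smyth_open_union {X} (T : topology X) (F : (KX T -> Prop) -> Prop) :
  (forall W, F W -> smyth_open T W) -> smyth_open T (fun K => exists W, F W /\ W K).
Proof.
  intros HF K [W [FW WK]].
  destruct (HF W FW K WK) as [A [oA [bA sA]]].
  exists A. repeat split; auto. intros K' bK'. exists W; auto.
Qed.

Definition smyth_topology {X} (T : topology X) : topology (KX T) :=
  @Topology (KX T) (smyth_open T) (smyth_open_full T) (@smyth_open_inter X T)
            (@smyth_open_union X T).

(* second countable: a countable base, enumerated by nat (repetitions allowed,
   so finite bases are included; the empty open set can pad) *)
Definition second_countable {X} (T : topology X) : Prop :=
  exists B : nat -> (X -> Prop),
    (forall n, open T (B n)) /\
    (forall U, open T U -> forall x, U x ->
       exists n, B n x /\ (forall y, B n y -> U y)).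

(* Main.v *)
Require Import Defs.
From Stdlib Require Import List Arith Bool.

Lemma bits_exist (l : list nat) : exists n, forall i, Nat.testbit n i = true <-> In i l.
Proof.
  induction l as [|a l [n Hn]].
  - exists 0. intros i. rewrite Nat.bits_0. simpl. split; discriminate || tauto.
  - exists (Nat.lor n (2 ^ a)). intros i. rewrite Nat.lor_spec, Nat.pow2_bits_eqb.
    rewrite orb_true_iff, Hn, Nat.eqb_eq. simpl. tauto.
Qed.

Section S.
Context {X : Type} (T : topology X).

Definition upK (x : X) : KX T.
Proof.
  exists (spec_le T x). split; [|split].
  - exists x. intros U _ H; exact H.
  - intros F HF Hc. destruct (Hc x (fun U _ H => H)) as [U [FU Ux]].
    exists (U :: nil). split.
    + intros V [<-|[]]; exact FU.
    + intros y Hy. exists U. split; [left; reflexivity|]. apply Hy; auto.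
  - intros y z Hy Hz U oU Ux. apply Hz; [exact oU|]. apply Hy; [exact oU|exact Ux].
Defined.

Lemma upK_box (U : X -> Prop) x : open T U -> U x -> box T U (upK x).
Proof. intros oU Ux y Hy. apply Hy; auto. Qed.

Lemma box_incl (U V : X -> Prop) : open T V ->
  (forall K, box T V K -> box T U K) -> forall y, V y -> U y.
Proof.
  intros oV H y Vy. apply (H (upK y) (upK_box V y oV Vy)). simpl. intros W _ h; exact h.
Qed.

Lemma cover_idx (B : nat -> X -> Prop) (P : nat -> Prop) (l : list (X -> Prop)) :
  (forall U, In U l -> exists i, U = B i /\ P i) ->
  exists li : list nat, (forall i, In i li -> P i) /\
     (forall U, In U l -> exists i, In i li /\ U = B i).
Proof.
  induction l as [|U l IH]; intros H.
  - exists nil. split; simpl; tauto.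
  - destruct IH as [li [H1 H2]]. { intros V HV; apply H; right; auto. }
    destruct (H U (or_introl eq_refl)) as [i [-> Pi]].
    exists (i :: li). split.
    + intros j [<-|Hj]; auto.
    + intros V [<-|HV]. * exists i; split; [left|]; auto.
      * destruct (H2 V HV) as [j [Hj ->]]. exists j; split; [right|]; auto.
Qed.

End S.

Theorem mainTheorem5 (X : Type) (T : topology X) (hT0 : T0 T) :
  second_countable T <-> second_countable (smyth_topology T).
Proof.
  split.
  - intros [B [oB bB]].
    set (V := fun n : nat => fun x : X =>
               exists U, (exists i, Nat.testbit n i = true /\ U = B i) /\ U x).
    assert (oV : forall n, open T (V n)).
    { intros n. apply open_union. intros U [i [_ ->]]. apply oB. }
    exists (fun n => box T (V n)). split.
    + intros n K HK. exists (V n). split; [apply oV|]. split; auto.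
    + intros W oW K WK. simpl in oW. destruct (oW K WK) as [U [oU [bU sU]]].
      destruct (proj1 (proj2 (proj2_sig K))
                  (fun W' => exists i, W' = B i /\ (forall y, B i y -> U y))) as [l [Hl1 Hl2]].
      * intros W' [i [-> _]]. apply oB.
      * intros x Kx. destruct (bB U oU x (bU x Kx)) as [n [Bn Hn]].
        exists (B n). split; eauto.
      * destruct (cover_idx B (fun i => forall y, B i y -> U y) l Hl1) as [li [Hli1 Hli2]].
        destruct (bits_exist li) as [n Hn].
        exists n. split.
        -- intros x Kx. destruct (Hl2 x Kx) as [W' [InW Wx]].
           destruct (Hli2 W' InW) as [i [Ini ->]].
           exists (B i). split; auto. exists i. split; auto. apply Hn; auto.
        -- intros K' bK'. apply sU. intros x K'x.
           destruct (bK' x K'x) as [U' [[i [Hi ->]] Bx]].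
           apply (Hli1 i); auto. apply Hn; auto.
  - intros [C [oC bC]].
    set (B := fun n : nat => fun x : X =>
               exists U, (open T U /\ forall K, box T U K -> C n K) /\ U x).
    exists B. split.
    + intros n. apply open_union. intros U [oU _]; exact oU.
    + intros U oU x Ux.
      assert (ob : open (smyth_topology T) (box T U)).
      { simpl. intros K HK. exists U. auto. }
      destruct (bC _ ob (upK T x) (upK_box T U x oU Ux)) as [n [Cn Hn]].
      exists n. split.
      * destruct (oC n (upK T x) Cn) as [V [oV [bV sV]]].
        exists V. split; [split; auto|]. apply bV. simpl. intros W _ h; exact h.
      * intros y [V [[oV HV] Vy]].
        apply (box_incl T U V oV); auto.
Qed.
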